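(* Let $f$ be a finitary Boolean function. Then for every $k\in\mathbb N$, $I_k(B_nf)\to I_k(f)$ as $n\to\infty$. If moreover $f$ is $p$-knowable for some $p>\tfrac12$, then $H(B_nf)\to H(f)$; and if $f$ is $p$-knowable for some $p>1$, then $I(B_nf)\to I(f)$.
   Context: Let $\Omega=\{-1,1\}$ and $\Omega^\infty=\{-1,1\}^{\mathbb N}$ with the uniform product probability measure; $\omega$ denotes a uniformly random element. A Boolean function is a measurable map $f:\Omega^\infty\to\Omega$. $\omega^{(k)}$ is $\omega$ with bit $k$ flipped; $I_k(f)=\mathbb P(f(\omega^{(k)})\ne f(\omega))$, $I(f)=\sum_kI_k(f)$, $H(f)=\sum_kI_k(f)^2$. A set $W\subseteq\mathbb N$ is a witness set for $f$ at $\omega$ if there is an event $A$ with $\mathbb P(A)=1$ such that for all $\tilde\omega\in A$: if $\tilde\omega_i=\omega_i$ for all $i\in W$ then $f(\tilde\omega)=f(\omega)$. $f$ is finitary if almost surely a finite witness set exists; then $W(f)(\omega)$ denotes the least finite witness set in the order: smaller maximum first, then smaller cardinality, then lexicographic. $f$ is $p$-knowable if it is finitary and $\mathbb E[(\max W(f))^p]<\infty$. $B_nf=\mathbf 1_{\{W(f)\subseteq[n]\}}f-\mathbf 1_{\{W(f)\not\subseteq[n]\}}$. *)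

(* Defs.v *)
From Stdlib Require Import Reals Lra Lia List Classical ClassicalEpsilon.
Open Scope R_scope.

(* Omega^infty = {-1,1}^N, encoded as nat -> bool (true = 1, false = -1).
   Coordinates are indexed by nat starting at 0; coordinate i is the
   paper's coordinate i+1, so [n] = {1..n} becomes {i | i < n}. *)
Definition Omega := nat -> bool.

Definition cyl (s : list bool) : Omega -> Prop :=
  fun w => forall i, (i < length s)%nat -> w i = nth i s false.

Inductive meas : (Omega -> Prop) -> Prop :=
| meas_cyl : forall s, meas (cyl s)
| meas_compl : forall A, meas A -> meas (fun w => ~ A w)
| meas_union : forall A : nat -> Omega -> Prop,
    (forall n, meas (A n)) -> meas (fun w => exists n, A n w)
| meas_ext : forall A B : Omega -> Prop,
    meas A -> (forall w, A w <-> B w) -> meas B.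

(* Countable covers by cylinders (None = empty piece). *)
Definition covers (A : Omega -> Prop) (s : nat -> option (list bool)) : Prop :=
  forall w, A w -> exists j c, s j = Some c /\ cyl c w.

Definition cweight (s : nat -> option (list bool)) (j : nat) : R :=
  match s j with None => 0 | Some c => (/ 2) ^ length c end.

(* r is the outer measure (infimum of total weights of covers) of A. *)
Definition outer_is (A : Omega -> Prop) (r : R) : Prop :=
  (forall s, covers A s -> forall eps, eps > 0 ->
       exists N, r - eps < sum_f_R0 (cweight s) N) /\
  (forall eps, eps > 0 -> exists s, covers A s /\
       forall N, sum_f_R0 (cweight s) N <= r + eps).

(* Uniform product probability (outer measure; equals the product measure
   on measurable sets). *)
Definition Pr (A : Omega -> Prop) : R := epsilon (inhabits 0) (outer_is A).

Definition measurable_fun (f : Omega -> bool) : Prop :=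
  meas (fun w => f w = true).

Definition flip (k : nat) (w : Omega) : Omega :=
  fun i => if Nat.eqb i k then negb (w i) else w i.

Definition Inf (k : nat) (f : Omega -> bool) : R :=
  Pr (fun w => f (flip k w) <> f w).

Definition finite_set (W : nat -> Prop) : Prop :=
  exists N, forall i, W i -> (i < N)%nat.

Definition witness (f : Omega -> bool) (w : Omega) (W : nat -> Prop) : Prop :=
  exists A, meas A /\ Pr A = 1 /\
    forall w', A w' -> (forall i, W i -> w' i = w i) -> f w' = f w.

Definition finitary (f : Omega -> bool) : Prop :=
  exists A, meas A /\ Pr A = 1 /\
    forall w, A w -> exists W, finite_set W /\ witness f w W.

(* "W(f)(w) is a subset of [n]": since the order on finite witness sets
   compares the maximum first, the least finite witness set is contained
   in [n] iff some witness set is contained in [n]. *)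
Definition W_sub (f : Omega -> bool) (w : Omega) (n : nat) : Prop :=
  exists W, (forall i, W i -> (i < n)%nat) /\ witness f w W.

(* maxW f w m : max W(f)(w) = m (1-based max; max of empty set = 0),
   i.e. m is the least n such that W(f)(w) is a subset of [n]. *)
Definition maxW (f : Omega -> bool) (w : Omega) (m : nat) : Prop :=
  W_sub f w m /\ forall n, W_sub f w n -> (m <= n)%nat.

Definition B (n : nat) (f : Omega -> bool) : Omega -> bool :=
  fun w => if excluded_middle_informative (W_sub f w n) then f w else false.

Definition powp (p : R) (m : nat) : R :=
  match m with O => 0 | _ => Rpower (INR m) p end.

Definition knowable (p : R) (f : Omega -> bool) : Prop :=
  finitary f /\
  exists l, infinite_sum (fun m => powp p m * Pr (fun w => maxW f w m)) l.

(* Main.v *)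
Require Import Defs.
From Stdlib Require Import Reals Lra Lia List Classical ClassicalEpsilon.
Open Scope R_scope.
Import ListNotations.

Fixpoint fsum (g : nat -> R) (n : nat) : R :=
  match n with O => 0 | S n' => fsum g n' + g n' end.

Lemma sum_fsum g N : sum_f_R0 g N = fsum g (S N).
Proof. induction N; simpl in *. lra. rewrite IHN. simpl. lra. Qed.

Lemma fsum_ext g h n : (forall i, (i < n)%nat -> g i = h i) -> fsum g n = fsum h n.
Proof. induction n; intros H; simpl. lra. rewrite IHn, H; auto. Qed.

Lemma fsum_le g h n : (forall i, (i < n)%nat -> g i <= h i) -> fsum g n <= fsum h n.
Proof. induction n; intros H; simpl. lra. assert (g n <= h n) by auto.
  assert (fsum g n <= fsum h n) by auto. lra. Qed.

Lemma fsum_nonneg g n : (forall i, 0 <= g i) -> 0 <= fsum g n.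
Proof. intros H; induction n; simpl. lra. specialize (H n). lra. Qed.

Lemma fsum_add g a b : fsum g (a + b) = fsum g a + fsum (fun i => g (a + i)%nat) b.
Proof. induction b; simpl. rewrite Nat.add_0_r. lra.
  rewrite Nat.add_succ_r. simpl. rewrite IHb. lra. Qed.

Lemma fsum_mono_n g n m : (forall i, 0 <= g i) -> (n <= m)%nat -> fsum g n <= fsum g m.
Proof. intros H Hnm. replace m with (n + (m - n))%nat by lia. rewrite fsum_add.
  pose proof (fsum_nonneg (fun i => g (n + i)%nat) (m - n) (fun i => H _)). lra. Qed.

Lemma fsum_plus g h n : fsum (fun i => g i + h i) n = fsum g n + fsum h n.
Proof. induction n; simpl. lra. rewrite IHn. lra. Qed.

Lemma fsum_scal c g n : fsum (fun i => c * g i) n = c * fsum g n.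
Proof. induction n; simpl. lra. rewrite IHn. lra. Qed.

Lemma fsum_const c n : fsum (fun _ => c) n = INR n * c.
Proof. induction n; simpl fsum. simpl. lra. rewrite IHn, S_INR. lra. Qed.

Lemma fsum_block g K n :
  fsum g (n * K) = fsum (fun j => fsum (fun t => g (j * K + t)%nat) K) n.
Proof. induction n. simpl. lra. replace (S n * K)%nat with (n * K + K)%nat by lia.
  rewrite fsum_add, IHn. simpl. lra. Qed.

Definition psum (s : nat -> option (list bool)) N := sum_f_R0 (cweight s) N.

Lemma cweight_nonneg s j : 0 <= cweight s j.
Proof. unfold cweight. destruct (s j). apply pow_le. lra. lra. Qed.

Lemma psum_nonneg s N : 0 <= psum s N.
Proof. unfold psum. rewrite sum_fsum. apply fsum_nonneg, cweight_nonneg. Qed.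

Lemma psum_mono s N M : (N <= M)%nat -> psum s N <= psum s M.
Proof. intros. unfold psum. rewrite !sum_fsum. apply fsum_mono_n. apply cweight_nonneg. lia. Qed.

Definition s_full : nat -> option (list bool) := fun j => match j with O => Some [] | _ => None end.

Lemma s_full_covers A : covers A s_full.
Proof. intros w _. exists O, []. split. reflexivity. intros i Hi. simpl in Hi. lia. Qed.

Lemma s_full_psum N : psum s_full N = 1.
Proof. unfold psum. induction N. simpl. unfold cweight; simpl. lra.
  simpl. rewrite IHN. unfold cweight. simpl. lra. Qed.

Lemma outer_exists A : exists r, outer_is A r.
Proof.
  set (E := fun x => exists s, covers A s /\ forall N, psum s N <= - x).
  assert (Hb : bound E). { exists 0. intros x [s [_ H]]. specialize (H O).
    pose proof (psum_nonneg s O). lra. }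
  assert (Hne : exists x, E x). { exists (-1). exists s_full. split. apply s_full_covers.
    intros N. rewrite s_full_psum. lra. }
  destruct (completeness E Hb Hne) as [m [Hub Hlub]].
  exists (- m). split.
  - intros s Hs eps Heps. apply NNPP. intros Hn.
    assert (HE : E (- (- m - eps))). { exists s. split; auto. intros N.
      apply Rnot_lt_le. intros Hlt. apply Hn. exists N. unfold psum in *. lra. }
    specialize (Hub _ HE). lra.
  - intros eps Heps. apply NNPP. intros Hn.
    assert (Hu : is_upper_bound E (m - eps)).
    { intros x [s [Hs HN]]. apply Rnot_lt_le. intros Hlt. apply Hn. exists s. split; auto.
      intros N. specialize (HN N). unfold psum in *. lra. }
    specialize (Hlub _ Hu). lra.
Qed.

Lemma Pr_spec A : outer_is A (Pr A).
Proof. unfold Pr. apply epsilon_spec. apply outer_exists. Qed.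

Lemma Pr_lb A s t : covers A s -> (forall N, psum s N <= t) -> Pr A <= t.
Proof. intros Hs Ht. destruct (Pr_spec A) as [H1 _]. apply le_epsilon. intros eps Heps.
  destruct (H1 s Hs eps Heps) as [N HN]. specialize (Ht N). unfold psum in Ht. lra. Qed.

Lemma Pr_ub A eps : eps > 0 -> exists s, covers A s /\ forall N, psum s N <= Pr A + eps.
Proof. intros. destruct (Pr_spec A) as [_ H2]. apply H2; auto. Qed.

Lemma Pr_nonneg A : 0 <= Pr A.
Proof. apply le_epsilon. intros eps Heps. destruct (Pr_ub A eps) as [s [_ Hs]]. lra.
  specialize (Hs O). pose proof (psum_nonneg s O). lra. Qed.

Lemma Pr_mono (A B : Omega -> Prop) : (forall w, A w -> B w) -> Pr A <= Pr B.
Proof. intros H. apply le_epsilon. intros eps Heps. destruct (Pr_ub B eps) as [s [Hs HN]]. lra.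
  apply (Pr_lb A s). intros w Hw. apply Hs, H, Hw. exact HN. Qed.

Lemma Pr_ext (A B : Omega -> Prop) : (forall w, A w <-> B w) -> Pr A = Pr B.
Proof. intros H. apply Rle_antisym; apply Pr_mono; firstorder. Qed.

Lemma Pr_full_le : Pr (fun _ => True) <= 1.
Proof. apply (Pr_lb _ s_full). apply s_full_covers. intros. rewrite s_full_psum. lra. Qed.

Lemma Pr_le1 A : Pr A <= 1.
Proof. eapply Rle_trans. apply (Pr_mono A (fun _ => True)). auto. apply Pr_full_le. Qed.

Definition s_empty : nat -> option (list bool) := fun _ => None.
Lemma Pr_empty (A : Omega -> Prop) : (forall w, ~ A w) -> Pr A = 0.
Proof. intros H. apply Rle_antisym. apply (Pr_lb A s_empty). intros w Hw. exfalso; eapply H; eauto.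
  intros N. unfold psum. rewrite sum_fsum. assert (fsum (cweight s_empty) (S N) = fsum (fun _ => 0) (S N)).
  apply fsum_ext. intros. reflexivity. rewrite H0, fsum_const. lra. apply Pr_nonneg. Qed.

Definition nextp (p : nat * nat) : nat * nat :=
  match p with (n, O) => (O, S n) | (n, S i) => (S n, i) end.
Fixpoint enum (j : nat) : nat * nat :=
  match j with O => (O, O) | S j' => nextp (enum j') end.
Fixpoint Tri (d : nat) : nat := match d with O => O | S d' => (Tri d' + S d')%nat end.

Lemma enum_diag d t : (t <= d)%nat -> enum (Tri d + t) = (t, (d - t)%nat).
Proof.
  revert t. induction d; intros t Ht.
  - assert (t = O) by lia. subst. reflexivity.
  - revert Ht. induction t; intros Ht.
    + simpl Tri. replace (Tri d + S d + 0)%nat with (S (Tri d + d)) by lia. simpl.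
      idtac. rewrite (IHd d) by lia. rewrite Nat.sub_diag. reflexivity.
    + replace (Tri (S d) + S t)%nat with (S (Tri (S d) + t)) by lia. simpl enum.
      change (Tri d + S d)%nat with (Tri (S d)). rewrite IHt by lia. unfold nextp. destruct (S d - t)%nat eqn:E. lia.
      f_equal. lia.
Qed.

Lemma enum_surj n i : enum (Tri (n + i) + n) = (n, i).
Proof. rewrite enum_diag by lia. f_equal. lia. Qed.

Lemma T_ge K : (K <= Tri K)%nat.
Proof. induction K; simpl; lia. Qed.

Lemma enum_sum h K :
  fsum (fun j => h (enum j)) (Tri K) = fsum (fun n => fsum (fun i => h (n, i)) (K - n)) K.
Proof.
  induction K. reflexivity.
  simpl Tri. rewrite fsum_add, IHK.
  rewrite (fsum_ext (fun i => h (enum (Tri K + i))) (fun t => h (t, (K - t)%nat)))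
    by (intros; rewrite enum_diag by lia; reflexivity).
  simpl fsum at 3. rewrite Nat.sub_diag.
  rewrite (fsum_ext (fun n => fsum (fun i => h (n, i)) (S K - n))
                    (fun n => fsum (fun i => h (n, i)) (K - n) + h (n, (K - n)%nat))).
  rewrite fsum_plus. simpl fsum. rewrite !Nat.sub_diag. simpl fsum. lra.
  intros n Hn. replace (S K - n)%nat with (S (K - n)) by lia. reflexivity.
Qed.

Lemma geom_sum K : fsum (fun n => (/ 2) ^ S n) K = 1 - (/ 2) ^ K.
Proof. induction K; cbn [fsum]. simpl. lra. rewrite IHK. simpl. lra. Qed.

Lemma Pr_countable (A : nat -> Omega -> Prop) L :
  (forall N, sum_f_R0 (fun n => Pr (A n)) N <= L) -> Pr (fun w => exists n, A n w) <= L.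
Proof.
  intros HL. apply le_epsilon. intros eps Heps.
  assert (H : forall n, exists s, covers (A n) s /\
             forall N, psum s N <= Pr (A n) + eps * (/ 2) ^ S n).
  { intros n. apply Pr_ub. apply Rmult_lt_0_compat. lra. apply pow_lt. lra. }
  set (c := fun n => proj1_sig (constructive_indefinite_description _ (H n))).
  assert (Hc : forall n, covers (A n) (c n) /\
             forall N, psum (c n) N <= Pr (A n) + eps * (/ 2) ^ S n).
  { intros n. unfold c. destruct (constructive_indefinite_description _ (H n)). exact a. }
  set (m := fun j => c (fst (enum j)) (snd (enum j))).
  apply (Pr_lb _ m).
  - intros w [n Hn]. destruct (proj1 (Hc n) w Hn) as [i [cl [E1 E2]]].
    exists (Tri (n + i) + n)%nat, cl. unfold m. rewrite enum_surj. simpl. auto.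
  - intros N. unfold psum. rewrite sum_fsum.
    set (h := fun p : nat * nat => cweight (c (fst p)) (snd p)).
    assert (Hnn : forall j, 0 <= cweight m j) by (intros; apply cweight_nonneg).
    apply Rle_trans with (fsum (cweight m) (Tri (S N))).
    apply fsum_mono_n; auto. apply T_ge.
    replace (fsum (cweight m) (Tri (S N))) with (fsum (fun j => h (enum j)) (Tri (S N))).
    2:{ apply fsum_ext. intros. reflexivity. }
    rewrite enum_sum.
    apply Rle_trans with (fsum (fun n => Pr (A n) + eps * (/ 2) ^ S n) (S N)).
    + apply fsum_le. intros n Hn. unfold h. cbn [fst snd].
      destruct (S N - n)%nat eqn:E. cbn [fsum].
      pose proof (Pr_nonneg (A n)). assert (0 <= eps * (/2) ^ S n).
      { apply Rmult_le_pos. lra. apply pow_le. lra. } lra.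
      pose proof (proj2 (Hc n) n0). unfold psum in H0. rewrite sum_fsum in H0. exact H0.
    + rewrite fsum_plus, fsum_scal, geom_sum. rewrite <- sum_fsum. specialize (HL N).
      assert (0 < (/2) ^ S N) by (apply pow_lt; lra). 
      assert (eps * (1 - (/ 2) ^ S N) <= eps). { assert (eps * (/2)^S N > 0). apply Rmult_lt_0_compat; lra. lra. }
      lra.
Qed.

Lemma Pr_union2 (A B : Omega -> Prop) : Pr (fun w => A w \/ B w) <= Pr A + Pr B.
Proof.
  set (F := fun n => match n with O => A | S O => B | _ => fun _ => False end).
  apply Rle_trans with (Pr (fun w => exists n, F n w)).
  { apply Pr_mono. intros w [H|H]. exists O; exact H. exists 1%nat; exact H. }
  apply Pr_countable. intros N. rewrite sum_fsum.
  assert (Hz : forall n, (2 <= n)%nat -> Pr (F n) = 0).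
  { intros n Hn. apply Pr_empty. destruct n as [|[|n]]; try lia. simpl. auto. }
  destruct N as [|N].
  - simpl. pose proof (Pr_nonneg B). lra.
  - replace (S (S N)) with (2 + N)%nat by lia. rewrite fsum_add.
    rewrite (fsum_ext (fun i => Pr (F (2 + i)%nat)) (fun _ => 0)). rewrite fsum_const.
    unfold F. simpl. lra.
    intros. apply Hz. lia.
Qed.

Lemma Pr_union3 (A B C : Omega -> Prop) : Pr (fun w => A w \/ B w \/ C w) <= Pr A + Pr B + Pr C.
Proof. eapply Rle_trans. apply Pr_union2. pose proof (Pr_union2 B C). lra. Qed.

Definition shift (w : Omega) : Omega := fun i => w (S i).

Lemma cyl_nil w : cyl [] w.
Proof. intros i Hi. simpl in Hi. lia. Qed.

Lemma cyl_cons x l w : cyl (x :: l) w <-> w O = x /\ cyl l (shift w).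
Proof. unfold cyl, shift; split.
  - intros H. split. apply (H O); simpl; lia. intros i Hi. apply (H (S i)); simpl; lia.
  - intros [H0 H1] i Hi. destruct i. simpl; auto. simpl. apply H1. simpl in Hi; lia.
Qed.

Fixpoint inter (e c : list bool) : option (list bool) :=
  match e with
  | [] => Some c
  | x :: e' => match c with
               | [] => Some e
               | y :: c' => if Bool.eqb x y then option_map (cons x) (inter e' c') else None
               end
  end.

Fixpoint diff (e c : list bool) : list (list bool) :=
  match c with
  | [] => []
  | y :: c' => match e with
               | [] => [negb y] :: map (cons y) (diff [] c')
               | x :: e' => if Bool.eqb x y then map (cons x) (diff e' c') else [e]
               end
  end.

Lemma inter_spec e : forall c w, cyl e w -> cyl c w -> exists i, inter e c = Some i /\ cyl i w.
Proof.
  induction e as [|x e IH]; intros c w He Hc.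
  - exists c. simpl. auto.
  - destruct c as [|y c].
    + exists (x :: e). simpl. auto.
    + apply cyl_cons in He as [H1 H2]. apply cyl_cons in Hc as [H3 H4].
      destruct (IH c (shift w) H2 H4) as [i [Hi Hi2]].
      exists (x :: i). simpl. assert (Bool.eqb x y = true) by (apply Bool.eqb_true_iff; congruence).
      rewrite H, Hi. simpl. split; auto. apply cyl_cons; auto.
Qed.

Lemma diff_spec c : forall e w, cyl e w -> ~ cyl c w -> exists d, In d (diff e c) /\ cyl d w.
Proof.
  induction c as [|y c IH]; intros e w He Hc.
  - exfalso. apply Hc, cyl_nil.
  - destruct e as [|x e].
    + destruct (Bool.bool_dec (w O) y) as [Hy|Hy].
      * assert (~ cyl c (shift w)). { intros H. apply Hc, cyl_cons. auto. }
        destruct (IH [] (shift w) (cyl_nil _) H) as [d [Hd1 Hd2]].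
        exists (y :: d). split. simpl. right. apply in_map. auto. apply cyl_cons. auto.
      * exists [negb y]. split. simpl. auto. apply cyl_cons. split.
        destruct (w O), y; simpl in *; congruence. apply cyl_nil.
    + apply cyl_cons in He as [H1 H2]. simpl.
      destruct (Bool.eqb x y) eqn:Exy.
      * apply Bool.eqb_prop in Exy. subst.
        assert (~ cyl c (shift w)). { intros H. apply Hc, cyl_cons. auto. }
        destruct (IH e (shift w) H2 H) as [d [Hd1 Hd2]].
        exists (w O :: d). split. apply in_map. auto. apply cyl_cons. auto.
      * exists (x :: e). split. simpl; auto. apply cyl_cons. auto.
Qed.

Definition wt (l : list bool) : R := (/ 2) ^ length l.
Definition wopt (o : option (list bool)) : R := match o with None => 0 | Some l => wt l end.
Fixpoint lsum (L : list (list bool)) : R := match L with [] => 0 | d :: L' => wt d + lsum L' end.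

Lemma cweight_wopt s j : cweight s j = wopt (s j).
Proof. reflexivity. Qed.

Lemma lsum_map_cons y L : lsum (map (cons y) L) = / 2 * lsum L.
Proof. induction L; simpl. lra. rewrite IHL. unfold wt. simpl. lra. Qed.

Lemma wopt_map_cons y o : wopt (option_map (cons y) o) = / 2 * wopt o.
Proof. destruct o; simpl. unfold wt; simpl; lra. lra. Qed.

Lemma inter_diff_wt c : forall e, wopt (inter e c) + lsum (diff e c) = wt e.
Proof.
  induction c as [|y c IH]; intros e.
  - destruct e; simpl; lra.
  - destruct e as [|x e].
    + simpl. rewrite lsum_map_cons. specialize (IH []). simpl in IH.
      unfold wt in *. simpl in *. lra.
    + simpl. destruct (Bool.eqb x y).
      * rewrite lsum_map_cons, wopt_map_cons. specialize (IH e). unfold wt in *. simpl. lra.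
      * simpl. lra.
Qed.

Lemma diff_length c : forall e, (length (diff e c) <= length c)%nat.
Proof.
  induction c as [|y c IH]; intros e; simpl. lia.
  destruct e as [|x e]. simpl. rewrite length_map. specialize (IH []). lia.
  destruct (Bool.eqb x y). rewrite length_map. specialize (IH e). lia. simpl. lia.
Qed.

Lemma nth_sum L : forall K, (length L <= K)%nat -> fsum (fun t => wopt (nth_error L t)) K = lsum L.
Proof.
  induction L as [|d L IH]; intros K HK.
  - simpl. rewrite (fsum_ext _ (fun _ => 0)). rewrite fsum_const. lra.
    intros i _. destruct i; reflexivity.
  - destruct K as [|K]. simpl in HK. lia.
    replace (S K) with (1 + K)%nat by lia. rewrite fsum_add. simpl in HK.
    simpl lsum. rewrite <- (IH K) by lia. simpl. lra.
Qed.

Definition carat (A : Omega -> Prop) : Prop :=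
  forall E : Omega -> Prop,
    Pr (fun w => E w /\ A w) + Pr (fun w => E w /\ ~ A w) <= Pr E.

Lemma divmod_block K j t : (t < K)%nat -> ((j * K + t) / K = j /\ (j * K + t) mod K = t)%nat.
Proof. intros H. assert (K <> O) by lia.
  assert (Hd : ((j * K + t) / K = j)%nat).
  { rewrite Nat.div_add_l by auto. rewrite Nat.div_small by auto. lia. }
  split; auto. pose proof (Nat.div_mod_eq (j * K + t) K). rewrite Hd in H1. lia. Qed.

Lemma cyl_carat c : carat (cyl c).
Proof.
  intros E. apply le_epsilon. intros eps Heps.
  destruct (Pr_ub E eps) as [s [Hs HsN]]. lra.
  set (K := S (length c)).
  set (s1 := fun j => match s j with Some e => inter e c | None => None end).
  set (s2 := fun k => match s (k / K)%nat with
                      | Some e => nth_error (diff e c) (k mod K) | None => None end).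
  assert (Hkey : forall J, psum s1 J + fsum (cweight s2) (S J * K) = psum s J).
  { intros J. unfold psum. rewrite !sum_fsum, fsum_block, <- fsum_plus. apply fsum_ext.
    intros j _. rewrite (fsum_ext _ (fun t => match s j with Some e => wopt (nth_error (diff e c) t) | None => 0 end)).
    - unfold s1. rewrite !cweight_wopt. destruct (s j) as [e|].
      + rewrite nth_sum. rewrite inter_diff_wt. reflexivity. pose proof (diff_length c e). unfold K. lia.
      + rewrite fsum_const. simpl. lra.
    - intros t Ht. rewrite cweight_wopt. unfold s2. destruct (divmod_block K j t Ht) as [D1 D2].
      rewrite D1, D2. destruct (s j); reflexivity. }
  assert (Hc1 : covers (fun w => E w /\ cyl c w) s1).
  { intros w [HE Hc]. destruct (Hs w HE) as [j [e [Hj He]]].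
    destruct (inter_spec e c w He Hc) as [i [Hi1 Hi2]]. exists j, i. unfold s1. rewrite Hj. auto. }
  assert (Hc2 : covers (fun w => E w /\ ~ cyl c w) s2).
  { intros w [HE Hc]. destruct (Hs w HE) as [j [e [Hj He]]].
    destruct (diff_spec c e w He Hc) as [d [Hd1 Hd2]].
    destruct (In_nth_error _ _ Hd1) as [t Ht].
    assert (Htl : (t < K)%nat). { assert (t < length (diff e c))%nat.
      apply nth_error_Some. congruence. pose proof (diff_length c e). unfold K. lia. }
    exists (j * K + t)%nat, d. unfold s2. destruct (divmod_block K j t Htl) as [D1 D2].
    rewrite D1, D2, Hj. auto. }
  assert (H2 : forall N, Pr (fun w => E w /\ ~ cyl c w) <= Pr E + eps - psum s1 N).
  { intros N. apply (Pr_lb _ s2 _ Hc2). intros M. set (J := Nat.max M N).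
    pose proof (Hkey J). pose proof (HsN J). pose proof (psum_mono s1 N J ltac:(lia)).
    assert (psum s2 M <= fsum (cweight s2) (S J * K)).
    { unfold psum. rewrite sum_fsum. apply fsum_mono_n. apply cweight_nonneg. unfold K. nia. }
    lra. }
  assert (H1 : Pr (fun w => E w /\ cyl c w) <= Pr E + eps - Pr (fun w => E w /\ ~ cyl c w)).
  { apply (Pr_lb _ s1 _ Hc1). intros N. specialize (H2 N). lra. }
  lra.
Qed.

Lemma carat_ext (A B : Omega -> Prop) : carat A -> (forall w, A w <-> B w) -> carat B.
Proof. intros H HAB E. rewrite <- (Pr_ext (fun w => E w /\ A w) (fun w => E w /\ B w)) by firstorder.
  rewrite <- (Pr_ext (fun w => E w /\ ~ A w) (fun w => E w /\ ~ B w)) by firstorder. apply H. Qed.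

Lemma carat_compl (A : Omega -> Prop) : carat A -> carat (fun w => ~ A w).
Proof. intros H E. rewrite (Pr_ext (fun w => E w /\ ~ ~ A w) (fun w => E w /\ A w)).
  specialize (H E). lra. intros w. split. intros [H1 H2]. split; auto. apply NNPP; auto.
  intros [H1 H2]; auto. Qed.

Lemma carat_union2 (A B : Omega -> Prop) : carat A -> carat B -> carat (fun w => A w \/ B w).
Proof.
  intros HA HB E.
  pose proof (HA E) as H1. pose proof (HB (fun w => E w /\ ~ A w)) as H2.
  assert (H3 : Pr (fun w => E w /\ (A w \/ B w)) <=
               Pr (fun w => E w /\ A w) + Pr (fun w => (E w /\ ~ A w) /\ B w)).
  { eapply Rle_trans. 2: apply Pr_union2. apply Pr_mono. intros w [HE [Ha|Hb]]. auto.
    destruct (classic (A w)); auto. }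
  rewrite (Pr_ext (fun w => E w /\ ~ (A w \/ B w)) (fun w => (E w /\ ~ A w) /\ ~ B w)) by (intros; tauto).
  lra.
Qed.

Lemma carat_empty : carat (fun _ => False).
Proof. intros E. rewrite Pr_empty by (intros w [_ H]; auto).
  rewrite (Pr_ext _ E) by (intros; tauto). lra. Qed.

Lemma carat_inter (A B : Omega -> Prop) : carat A -> carat B -> carat (fun w => A w /\ B w).
Proof. intros HA HB. apply (carat_ext (fun w => ~ (~ A w \/ ~ B w))).
  apply carat_compl, carat_union2; apply carat_compl; auto.
  intros w. split. intros H. split; apply NNPP; tauto. tauto. Qed.

Lemma least_nat (P : nat -> Prop) : (exists n, P n) -> exists n, P n /\ forall m, (m < n)%nat -> ~ P m.
Proof.
  intros [n Hn]. revert Hn. induction n as [n IH] using (well_founded_induction Nat.lt_wf_0). intros Hn.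
  destruct (classic (exists m, (m < n)%nat /\ P m)) as [[m [Hm1 Hm2]]|Hno].
  - apply (IH m Hm1 Hm2).
  - exists n. split; auto. intros m Hm HP. apply Hno. eauto.
Qed.

Lemma carat_countable (A : nat -> Omega -> Prop) :
  (forall n, carat (A n)) -> carat (fun w => exists n, A n w).
Proof.
  intros HA.
  set (F := fun n w => exists m, (m < n)%nat /\ A m w).
  assert (HF : forall n, carat (F n)).
  { induction n.
    - apply (carat_ext _ _ carat_empty). intros w. split. tauto. intros [m [Hm _]]. lia.
    - apply (carat_ext _ _ (carat_union2 _ _ IHn (HA n))). intros w. unfold F. split.
      + intros [[m [Hm1 Hm2]]|H]. exists m. split; auto. exists n. split; auto.
      + intros [m [Hm1 Hm2]]. destruct (Nat.eq_dec m n). subst. right; auto. left. exists m. split; auto. lia. }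
  set (D := fun n w => A n w /\ ~ F n w).
  assert (Hsum : forall E n, fsum (fun m => Pr (fun w => E w /\ D m w)) n <= Pr (fun w => E w /\ F n w)).
  { intros E n. induction n.
    - simpl. apply Pr_nonneg.
    - simpl. pose proof (HF n (fun w => E w /\ F (S n) w)) as H. cbv beta in H.
      rewrite (Pr_ext (fun w => (E w /\ F (S n) w) /\ F n w) (fun w => E w /\ F n w)) in H.
      rewrite (Pr_ext (fun w => (E w /\ F (S n) w) /\ ~ F n w) (fun w => E w /\ D n w)) in H.
      lra.
      + intros w. unfold D, F. split.
        * intros [[HE [m [Hm1 Hm2]]] Hn]. split; auto. split; auto.
          destruct (Nat.eq_dec m n). subst; auto. exfalso. apply Hn. exists m. split; auto. lia.
        * intros [HE [Ha Hn]]. split; auto. split; auto. exists n. split; auto.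
      + intros w. unfold F. split. tauto. intros [HE [m [Hm1 Hm2]]].
        split. split. exact HE. exists m. split; [lia|exact Hm2]. exists m. auto. }
  intros E.
  assert (Hb : forall n, fsum (fun m => Pr (fun w => E w /\ D m w)) n <=
                         Pr E - Pr (fun w => E w /\ ~ (exists n, A n w))).
  { intros n. pose proof (HF n E). pose proof (Hsum E n).
    assert (Pr (fun w => E w /\ ~ (exists n, A n w)) <= Pr (fun w => E w /\ ~ F n w)).
    { apply Pr_mono. intros w [HE Hn]. split; auto. intros [m [_ Hm]]. apply Hn. eauto. }
    lra. }
  assert (Pr (fun w => E w /\ exists n, A n w) <= Pr E - Pr (fun w => E w /\ ~ (exists n, A n w))).
  { eapply Rle_trans. 2: apply (Pr_countable (fun m w => E w /\ D m w)).
    - apply Pr_mono. intros w [HE Hex]. destruct (least_nat _ Hex) as [n [Hn Hmin]].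
      exists n. split; auto. split; auto. intros [m [Hm1 Hm2]]. apply (Hmin m Hm1 Hm2).
    - intros N. rewrite sum_fsum. apply Hb. }
  lra.
Qed.

Lemma meas_carat A : meas A -> carat A.
Proof.
  induction 1.
  - apply cyl_carat.
  - apply carat_compl; auto.
  - apply carat_countable; auto.
  - eapply carat_ext; eauto.
Qed.

Fixpoint flipc (k : nat) (c : list bool) {struct c} : list bool :=
  match c with
  | [] => []
  | x :: l => match k with O => negb x :: l | S k' => x :: flipc k' l end
  end.

Lemma flipc_length k c : length (flipc k c) = length c.
Proof. revert k; induction c; intros k. reflexivity. destruct k; cbn. reflexivity. rewrite IHc. reflexivity. Qed.

Lemma flipc_cyl k c : forall w, cyl c (flip k w) -> cyl (flipc k c) w.
Proof.
  revert k. induction c as [|x c IH]; intros k w H. apply cyl_nil.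
  apply cyl_cons in H as [H1 H2]. destruct k as [|k]; simpl; apply cyl_cons; split.
  - unfold flip in H1. simpl in H1. rewrite <- H1. destruct (w O); reflexivity.
  - unfold cyl in *. intros i Hi. specialize (H2 i Hi). unfold shift, flip in H2. simpl in H2. exact H2.
  - unfold flip in H1. simpl in H1. exact H1.
  - apply IH. unfold cyl in *. intros i Hi. rewrite <- (H2 i Hi). unfold shift, flip. simpl. reflexivity.
Qed.

Lemma Pr_flip k (A : Omega -> Prop) : Pr (fun w => A (flip k w)) <= Pr A.
Proof.
  apply le_epsilon. intros eps Heps. destruct (Pr_ub A eps) as [s [Hs HN]]. lra.
  apply (Pr_lb _ (fun j => option_map (flipc k) (s j))).
  - intros w Hw. destruct (Hs _ Hw) as [j [c [Hj Hc]]]. exists j, (flipc k c). rewrite Hj. simpl.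
    split; auto. apply flipc_cyl; auto.
  - intros N. rewrite <- (HN N). unfold psum. apply Req_le. apply sum_eq. intros i _.
    unfold cweight. destruct (s i); simpl; auto. rewrite flipc_length. auto.
Qed.

Lemma meas_full : meas (fun _ => True).
Proof. apply (meas_ext (cyl [])). constructor. intros w; split; auto. intros; apply cyl_nil. Qed.

Lemma meas_empty : meas (fun _ => False).
Proof. apply (meas_ext (fun w => ~ True)). constructor. apply meas_full. tauto. Qed.

Lemma meas_union2 A B : meas A -> meas B -> meas (fun w => A w \/ B w).
Proof. intros HA HB. apply (meas_ext (fun w => exists n, (match n with O => A | _ => B end) w)).
  constructor. intros [|n]; auto. intros w; split.
  intros [[|n] H]; auto. intros [H|H]. exists O; auto. exists 1%nat; auto. Qed.

Lemma meas_inter A B : meas A -> meas B -> meas (fun w => A w /\ B w).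
Proof. intros HA HB. apply (meas_ext (fun w => ~ (~ A w \/ ~ B w))).
  constructor. apply meas_union2; constructor; auto.
  intros w. split. intros H. split; apply NNPP; tauto. tauto. Qed.

Fixpoint all_lists (m : nat) : list (list bool) :=
  match m with O => [[]] | S m' => map (cons true) (all_lists m') ++ map (cons false) (all_lists m') end.

Lemma all_lists_in m : forall l, length l = m -> In l (all_lists m).
Proof. induction m; intros l Hl. destruct l; simpl in *; auto; lia.
  destruct l as [|x l]; simpl in Hl. lia. simpl. apply in_or_app.
  destruct x; [left|right]; apply in_map; apply IHm; lia. Qed.

Lemma all_lists_len m : forall l, In l (all_lists m) -> length l = m.
Proof. induction m; intros l Hl. simpl in Hl. destruct Hl as [H|[]]. subst; auto.
  simpl in Hl. apply in_app_or in Hl. destruct Hl as [H|H]; apply in_map_iff in H;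
  destruct H as [x [Hx1 Hx2]]; subst; simpl; f_equal; auto. Qed.

Definition prefix (m : nat) (w : Omega) : list bool := map w (seq 0 m).

Lemma prefix_length m w : length (prefix m w) = m.
Proof. unfold prefix. rewrite length_map, length_seq. auto. Qed.

Lemma prefix_nth m w i : (i < m)%nat -> nth i (prefix m w) false = w i.
Proof. intros H. unfold prefix. rewrite (nth_indep _ false (w O)) by (rewrite length_map, length_seq; auto).
  rewrite map_nth, seq_nth by auto. auto. Qed.

Lemma cyl_prefix m w w' : cyl (prefix m w) w' <-> forall i, (i < m)%nat -> w' i = w i.
Proof. unfold cyl. rewrite prefix_length. split; intros H i Hi.
  - rewrite (H i Hi). apply prefix_nth; auto.
  - rewrite prefix_nth by auto. apply H; auto. Qed.

Lemma cyl_eq_prefix m l w : length l = m -> cyl l w -> prefix m w = l.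
Proof. intros Hl Hc. apply (nth_ext _ _ false false). rewrite prefix_length; auto.
  intros i Hi. rewrite prefix_length in Hi. rewrite prefix_nth by auto. apply (Hc i). lia. Qed.

Lemma prefix_flip m k w : (m <= k)%nat -> prefix m (flip k w) = prefix m w.
Proof. intros H. unfold prefix. apply map_ext_in. intros i Hi. apply in_seq in Hi.
  unfold flip. destruct (Nat.eqb_spec i k). lia. auto. Qed.

Lemma meas_prefix m (P : list bool -> Prop) : meas (fun w => P (prefix m w)).
Proof.
  set (Fam := fun j => match nth_error (all_lists m) j with
                       | Some l => fun w => P l /\ cyl l w | None => fun _ => False end).
  apply (meas_ext (fun w => exists j, Fam j w)).
  - constructor. intros j. unfold Fam. destruct (nth_error (all_lists m) j) as [l|].
    + destruct (classic (P l)). apply (meas_ext (cyl l)). constructor. tauto.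
      apply (meas_ext _ _ meas_empty). tauto.
    + apply meas_empty.
  - intros w. split.
    + intros [j Hj]. unfold Fam in Hj. destruct (nth_error (all_lists m) j) eqn:E; [|tauto].
      destruct Hj as [HP Hc]. rewrite (cyl_eq_prefix m l w); auto.
      apply (all_lists_len m). eapply nth_error_In; eauto.
    + intros HP. destruct (In_nth_error _ _ (all_lists_in m (prefix m w) (prefix_length m w))) as [j Hj].
      exists j. unfold Fam. rewrite Hj. split; auto. apply cyl_prefix. auto.
Qed.

Section F.
Variable f : Omega -> bool.

Definition good (c : list bool) (b : bool) : Prop :=
  exists A', meas A' /\ Pr A' = 1 /\ forall w', A' w' -> cyl c w' -> f w' = b.

Lemma W_sub_good w n : W_sub f w n <-> good (prefix n w) (f w).
Proof. split.
  - intros [W [HW [A' [H1 [H2 H3]]]]]. exists A'. split; auto. split; auto.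
    intros w' Hw' Hc. apply H3; auto. intros i Hi. apply (proj1 (cyl_prefix n w w') Hc). auto.
  - intros [A' [H1 [H2 H3]]]. exists (fun i => (i < n)%nat). split; auto.
    exists A'. split; auto. split; auto. intros w' Hw' Hag. apply H3; auto. apply cyl_prefix. auto.
Qed.

Lemma meas_W_sub (Hmeas : measurable_fun f) n : meas (fun w => W_sub f w n).
Proof.
  apply (meas_ext (fun w => (f w = true /\ good (prefix n w) true) \/ (f w = false /\ good (prefix n w) false))).
  - assert (Hf : meas (fun w => f w = false)).
    { apply (meas_ext (fun w => ~ f w = true)). constructor. apply Hmeas.
      intros w. destruct (f w); split; intros H; try discriminate; try (exfalso; apply H; reflexivity); auto. }
    apply meas_union2; apply meas_inter; auto.
    apply (meas_prefix n (fun l => good l true)).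
    apply (meas_prefix n (fun l => good l false)).
  - intros w. rewrite W_sub_good. destruct (f w); intuition congruence.
Qed.

Lemma W_sub_mono w n m : (n <= m)%nat -> W_sub f w n -> W_sub f w m.
Proof. intros H [W [HW Hw]]. exists W. split; auto. intros i Hi. specialize (HW i Hi). lia. Qed.

Definition Zs (k : nat) : Omega -> Prop := fun w => good (prefix k w) (negb (f w)).

Lemma Pr_full_one : finitary f -> Pr (fun _ => True) = 1.
Proof. intros [A [HA [HP _]]]. apply Rle_antisym. apply Pr_full_le. rewrite <- HP. apply Pr_mono. auto. Qed.

Lemma null_compl A : Pr (fun _ => True) = 1 -> meas A -> Pr A = 1 -> Pr (fun w => ~ A w) = 0.
Proof. intros H1 HA HP. pose proof (meas_carat A HA (fun _ => True)) as H. cbv beta in H.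
  rewrite (Pr_ext (fun w => True /\ A w) A) in H by tauto.
  rewrite (Pr_ext (fun w => True /\ ~ A w) (fun w => ~ A w)) in H by tauto.
  pose proof (Pr_nonneg (fun w => ~ A w)). lra. Qed.

Lemma sum_zero_le (g : nat -> R) N : (forall n, g n = 0) -> sum_f_R0 g N <= 0.
Proof. intros H. rewrite sum_fsum, (fsum_ext _ (fun _ => 0)), fsum_const. lra. intros; auto. Qed.

Lemma Zs_null (H1 : Pr (fun _ => True) = 1) k : Pr (Zs k) = 0.
Proof.
  set (N := fun c b w => good c b /\ cyl c w /\ f w <> b).
  assert (HN : forall c b, Pr (N c b) = 0).
  { intros c b. destruct (classic (good c b)) as [Hg|Hg].
    - destruct Hg as [A' [HA1 [HA2 HA3]]]. apply Rle_antisym. 2: apply Pr_nonneg.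
      rewrite <- (null_compl A' H1 HA1 HA2). apply Pr_mono. intros w [_ [Hc Hf]] HA. apply Hf; auto.
    - apply Pr_empty. intros w [Hg' _]. auto. }
  set (Y := fun j => match nth_error (all_lists k) j with
                     | Some c => fun w => N c true w \/ N c false w | None => fun _ => False end).
  assert (HY : forall j, Pr (Y j) = 0).
  { intros j. unfold Y. destruct (nth_error (all_lists k) j) as [c|].
    - apply Rle_antisym. 2: apply Pr_nonneg. eapply Rle_trans. apply Pr_union2. rewrite !HN. lra.
    - apply Pr_empty. auto. }
  apply Rle_antisym. 2: apply Pr_nonneg.
  apply Rle_trans with (Pr (fun w => exists j, Y j w)).
  - apply Pr_mono. intros w Hz.
    destruct (In_nth_error _ _ (all_lists_in k (prefix k w) (prefix_length k w))) as [j Hj].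
    exists j. unfold Y. rewrite Hj. unfold Zs in Hz.
    assert (Hc : cyl (prefix k w) w) by (apply cyl_prefix; auto).
    destruct (f w) eqn:Ef; simpl in Hz; [right|left]; unfold N; rewrite Ef; repeat split; auto; congruence.
  - apply Pr_countable. intros. apply sum_zero_le. auto.
Qed.

End F.

Lemma cont_down (X : nat -> Omega -> Prop) (Z : Omega -> Prop) :
  (forall n, carat (X n)) -> (forall n w, X (S n) w -> X n w) ->
  (forall w, (forall n, X n w) -> Z w) -> Pr Z = 0 -> Un_cv (fun n => Pr (X n)) 0.
Proof.
  intros HX Hdec Hint HZ.
  set (a := fun n => Pr (X n)).
  assert (Hdec' : forall n m w, (m <= n)%nat -> X n w -> X m w).
  { intros n m w Hmn. induction Hmn; auto. }
  assert (Hg : Un_growing (opp_seq a)).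
  { intros n. unfold opp_seq, a. pose proof (Pr_mono _ _ (Hdec n)). lra. }
  assert (Hb : has_ub (opp_seq a)).
  { exists 0. intros x [i Hi]. subst. unfold opp_seq, a. pose proof (Pr_nonneg (X i)). lra. }
  destruct (growing_cv _ Hg Hb) as [l' Hl'].
  set (L := - l').
  assert (HaL : Un_cv a L).
  { pose proof (CV_opp _ _ Hl'). unfold L. intros eps Heps. destruct (H eps Heps) as [N HN].
    exists N. intros n Hn. specialize (HN n Hn). unfold opp_seq in HN. rewrite Ropp_involutive in HN. exact HN. }
  assert (HLa : forall n, L <= a n).
  { intros n. pose proof (growing_ineq _ _ Hg Hl' n). unfold opp_seq in H. unfold L. lra. }
  assert (HL0 : 0 <= L).
  { apply Rle_cv_lim with (Un := fun _ => 0) (Vn := a). intros; apply Pr_nonneg.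
    intros eps Heps. exists O. intros. unfold Rdist. rewrite Rminus_diag, Rabs_R0. lra. exact HaL. }
  set (D := fun m w => X m w /\ ~ X (S m) w).
  assert (Hsum : forall n J, fsum (fun j => Pr (D (n + j)%nat)) J + a (n + J)%nat <= a n).
  { intros n J. induction J.
    - simpl. rewrite Nat.add_0_r. lra.
    - simpl. pose proof (HX (S (n + J)) (X (n + J)%nat)) as H.
      rewrite (Pr_ext (fun w => X (n + J)%nat w /\ X (S (n + J)) w) (X (S (n + J)))) in H.
      2:{ intros w. split. tauto. intros Hw. split; auto. }
      unfold a in *. replace (n + S J)%nat with (S (n + J)) by lia. change (Pr (fun w => X (n + J)%nat w /\ ~ X (S (n + J)) w)) with (Pr (D (n + J)%nat)) in H. lra. }
  assert (HLle : L <= 0).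
  { assert (H : a O <= 0 + (a O - L)).
    { unfold a at 1. apply Rle_trans with (Pr (fun w => exists j, (match j with O => Z | S j' => D (0 + j')%nat end) w)).
      - apply Pr_mono. intros w Hw. destruct (classic (forall n, X n w)) as [Hall|Hno].
        + exists O. auto.
        + apply not_all_ex_not in Hno. destruct (least_nat _ Hno) as [m0 [Hm0 Hmin]].
          destruct m0 as [|m1]. exfalso; auto.
          exists (S m1). simpl. unfold D. split; auto. apply NNPP. intros Hc. apply (Hmin m1); auto.
      - apply Pr_countable. intros N. rewrite sum_fsum. replace (S N) with (1 + N)%nat by lia.
        rewrite fsum_add. simpl fsum at 1. replace (Pr (fun w => Z w)) with 0 by (rewrite <- HZ; apply Pr_ext; tauto). rewrite (fsum_ext _ (fun j => Pr (D (0 + j)%nat))) by (intros; reflexivity).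
        pose proof (Hsum O N). pose proof (HLa (0 + N)%nat). simpl in *. lra. }
    lra. }
  assert (L = 0) by lra. rewrite <- H. exact HaL.
Qed.

Lemma cv_const c : Un_cv (fun _ => c) c.
Proof. intros eps Heps. exists O. intros. unfold Rdist. rewrite Rminus_diag, Rabs_R0. lra. Qed.

Lemma Un_cv_ext u v l : (forall n, u n = v n) -> Un_cv u l -> Un_cv v l.
Proof. intros H Hu eps Heps. destruct (Hu eps Heps) as [N HN]. exists N. intros n Hn. rewrite <- H. auto. Qed.

Lemma fsum_cv (u : nat -> nat -> R) (L : nat -> R) K :
  (forall k, Un_cv (u k) (L k)) -> Un_cv (fun N => fsum (fun k => u k N) K) (fsum L K).
Proof. intros H. induction K. simpl. apply cv_const. simpl. apply CV_plus; auto. Qed.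

Lemma cv_le_const u l c : Un_cv u l -> (forall n, u n <= c) -> l <= c.
Proof. intros H1 H2. apply Rle_cv_lim with (Un := u) (Vn := fun _ => c); auto. apply cv_const. Qed.

Lemma partial_le_lim g l N : (forall n, 0 <= g n) -> infinite_sum g l -> sum_f_R0 g N <= l.
Proof. intros Hg Hl. apply (growing_ineq (fun N => sum_f_R0 g N)). intros n. simpl. specialize (Hg (S n)). lra.
  exact Hl. Qed.

Lemma powp_nonneg p m : 0 <= powp p m.
Proof. destruct m; simpl. lra. unfold Rpower. left. apply exp_pos. Qed.

Lemma INR_S_pos m : 0 < INR (S m).
Proof. apply lt_0_INR. lia. Qed.

Lemma powp_ge1 p m : 0 <= p -> 1 <= powp p (S m).
Proof. intros Hp. unfold powp. rewrite <- (Rpower_O (INR (S m))) by apply INR_S_pos.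
  apply Rle_Rpower; auto. rewrite S_INR. pose proof (pos_INR m). lra. Qed.

Lemma INR_le_Rpower m p : 1 <= p -> INR (S m) <= Rpower (INR (S m)) p.
Proof. intros Hp. rewrite <- (Rpower_1 (INR (S m))) at 1 by apply INR_S_pos.
  apply Rle_Rpower; auto. rewrite S_INR. pose proof (pos_INR m). lra. Qed.

Section Series.
Variable q : nat -> R.
Variable p l : R.
Hypothesis Hq : forall m, 0 <= q m.
Hypothesis Hp : 0 <= p.
Hypothesis Hl : infinite_sum (fun m => powp p m * q m) l.

Definition t k N := fsum (fun j => q (S k + j)%nat) N.

Lemma t_nonneg k N : 0 <= t k N.
Proof. apply fsum_nonneg. auto. Qed.

Lemma t_mono k N M : (N <= M)%nat -> t k N <= t k M.
Proof. intros. apply fsum_mono_n; auto. Qed.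

Lemma t_S k N : t k (S N) = t k N + q (S k + N)%nat.
Proof. reflexivity. Qed.

Lemma pq_nonneg m : 0 <= powp p m * q m.
Proof. apply Rmult_le_pos. apply powp_nonneg. auto. Qed.

Lemma t_bound k N : t k N <= l.
Proof.
  apply Rle_trans with (fsum (fun j => powp p (S k + j) * q (S k + j)%nat) N).
  - apply fsum_le. intros i _. simpl plus. pose proof (powp_ge1 p (k + i) Hp).
    pose proof (Hq (S (k + i))). nra.
  - apply Rle_trans with (fsum (fun m => powp p m * q m) (S k + N)).
    rewrite fsum_add. pose proof (fsum_nonneg (fun m => powp p m * q m) (S k) pq_nonneg). lra.
    replace (S k + N)%nat with (S (k + N)) by lia. rewrite <- sum_fsum. apply partial_le_lim. apply pq_nonneg. auto.
Qed.

Lemma T_ex k : {T | Un_cv (t k) T}.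
Proof. apply growing_cv. intros n. rewrite t_S. specialize (Hq (S k + n)%nat). lra.
  exists l. intros x [i Hi]. subst. apply t_bound. Qed.

Definition T k := proj1_sig (T_ex k).
Lemma T_cv k : Un_cv (t k) (T k).
Proof. unfold T. destruct (T_ex k). auto. Qed.
Lemma t_le_T k N : t k N <= T k.
Proof. apply growing_ineq. intros n. rewrite t_S. specialize (Hq (S k + n)%nat). lra. apply T_cv. Qed.
Lemma T_nonneg k : 0 <= T k.
Proof. pose proof (t_le_T k O). pose proof (t_nonneg k O). lra. Qed.

Definition Z M := fsum (fun k => t k (M - k)) M.
Definition X M := fsum (fun k => t k (M - k) * t k (M - k)) M.
Definition Y M := fsum (fun m => powp p (S m) * q (S m)) M.

Lemma Z_S M : Z (S M) = Z M + INR (S M) * q (S M).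
Proof.
  unfold Z. rewrite (fsum_ext _ (fun k => t k (M - k) + q (S M))).
  rewrite fsum_plus, fsum_const. simpl fsum. rewrite Nat.sub_diag. change (t M 0) with 0.
  rewrite !S_INR. lra.
  intros k Hk. replace (S M - k)%nat with (S (M - k)) by lia. rewrite t_S. f_equal. f_equal. lia.
Qed.

Lemma X_S M : X (S M) = X M + 2 * q (S M) * Z M + INR (S M) * (q (S M) * q (S M)).
Proof.
  unfold X. rewrite (fsum_ext _ (fun k => t k (M - k) * t k (M - k) + 2 * q (S M) * t k (M - k) + q (S M) * q (S M))).
  rewrite !fsum_plus, fsum_scal, fsum_const. simpl fsum. rewrite Nat.sub_diag. change (t M 0) with 0.
  rewrite !S_INR. unfold Z. lra.
  intros k Hk. replace (S M - k)%nat with (S (M - k)) by lia. rewrite t_S.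
  replace (S k + (M - k))%nat with (S M) by lia. ring.
Qed.

Lemma Y_le M : Y M <= l.
Proof.
  apply Rle_trans with (fsum (fun m => powp p m * q m) (1 + M)).
  rewrite fsum_add. apply Req_le. cbn [fsum]. unfold Y. replace (powp p 0 * q 0%nat) with 0 by (simpl; ring). rewrite !Rplus_0_l. apply fsum_ext. intros; reflexivity.
  rewrite <- sum_fsum. apply partial_le_lim. apply pq_nonneg. auto.
Qed.

Lemma Y_nonneg M : 0 <= Y M.
Proof. apply fsum_nonneg. intros. apply pq_nonneg. Qed.

Lemma window K N k : (k < K)%nat -> t k N <= t k (K + N - k).
Proof. intros. apply t_mono. lia. Qed.

Lemma T_sum_bound (Hp1 : 1 <= p) K : fsum T K <= l.
Proof.
  apply cv_le_const with (u := fun N => fsum (fun k => t k N) K).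
  apply fsum_cv. apply T_cv.
  intros N. apply Rle_trans with (Z (K + N)).
  - unfold Z. apply Rle_trans with (fsum (fun k => t k (K + N - k)) K).
    apply fsum_le. intros. apply window; auto.
    apply fsum_mono_n. intros; apply t_nonneg. lia.
  - apply Rle_trans with (Y (K + N)). 2: apply Y_le.
    assert (forall M, Z M = fsum (fun m => INR (S m) * q (S m)) M).
    { induction M. reflexivity. rewrite Z_S, IHM. reflexivity. }
    rewrite H. apply fsum_le. intros i _. unfold powp.
    pose proof (INR_le_Rpower i p Hp1). pose proof (Hq (S i)). nra.
Qed.

Lemma X_bound (Hp2 : 1/2 <= p) M : X M <= Y M * Y M.
Proof.
  induction M. unfold X, Y. simpl. lra.
  rewrite X_S. set (R := Rpower (INR (S M)) p).
  assert (HY : Y (S M) = Y M + R * q (S M)) by reflexivity.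
  assert (HR : INR (S M) <= R * R).
  { unfold R. rewrite <- Rpower_plus. rewrite <- (Rpower_1 (INR (S M))) at 1 by apply INR_S_pos.
    apply Rle_Rpower. rewrite S_INR. pose proof (pos_INR M). lra. lra. }
  assert (HZ : Z M <= R * Y M).
  { assert (forall M, Z M = fsum (fun m => INR (S m) * q (S m)) M).
    { induction M0. reflexivity. rewrite Z_S, IHM0. reflexivity. }
    rewrite H. unfold Y. rewrite <- fsum_scal. apply fsum_le. intros i Hi.
    assert (INR (S i) <= R * powp p (S i)).
    { unfold powp. unfold R. 
      apply Rle_trans with (Rpower (INR (S i)) (p + p)).
      rewrite <- (Rpower_1 (INR (S i))) at 1 by apply INR_S_pos.
      apply Rle_Rpower. rewrite S_INR. pose proof (pos_INR i). lra. lra.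
      rewrite Rpower_plus. apply Rmult_le_compat_r. left. apply exp_pos.
      apply Rle_Rpower_l. auto. split. apply INR_S_pos. apply le_INR. lia. }
    pose proof (Hq (S i)). nra. }
  rewrite HY. pose proof (Hq (S M)). pose proof (Y_nonneg M).
  assert (q (S M) * Z M <= q (S M) * (R * Y M)) by (apply Rmult_le_compat_l; auto).
  assert (INR (S M) * (q (S M) * q (S M)) <= R * R * (q (S M) * q (S M))).
  { apply Rmult_le_compat_r. nra. auto. }
  nra.
Qed.

Lemma T2_sum_bound (Hp2 : 1/2 <= p) K : fsum (fun k => T k * T k) K <= l * l.
Proof.
  apply cv_le_const with (u := fun N => fsum (fun k => t k N * t k N) K).
  apply fsum_cv. intros k. apply CV_mult; apply T_cv.
  intros N. apply Rle_trans with (X (K + N)).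
  - unfold X. apply Rle_trans with (fsum (fun k => t k (K + N - k) * t k (K + N - k)) K).
    apply fsum_le. intros. pose proof (window K N i H). pose proof (t_nonneg i N). nra.
    apply fsum_mono_n. intros. pose proof (t_nonneg i (K + N - i)). nra. lia.
  - eapply Rle_trans. apply X_bound; auto. pose proof (Y_le (K + N)). pose proof (Y_nonneg (K + N)). nra.
Qed.

End Series.

Lemma summable_of_bounded g C : (forall k, 0 <= g k) -> (forall K, fsum g K <= C) -> exists G, infinite_sum g G.
Proof.
  intros Hg HC. assert (Hgr : Un_growing (fun N => sum_f_R0 g N)).
  { intros n. simpl. specialize (Hg (S n)). lra. }
  destruct (growing_cv _ Hgr) as [G HG].
  exists C. intros x [i Hi]. subst. rewrite sum_fsum. auto.
  exists G. exact HG.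
Qed.

Lemma tail_bound (h g : nat -> R) Sh G K :
  (forall k, 0 <= h k <= g k) -> infinite_sum h Sh -> infinite_sum g G ->
  0 <= Sh - sum_f_R0 h K <= G - sum_f_R0 g K.
Proof.
  intros Hhg HS HG.
  assert (Hh0 : forall k, 0 <= h k) by (intros k; apply Hhg).
  assert (Hg0 : forall k, 0 <= g k) by (intros k; pose proof (Hhg k); lra).
  split.
  - pose proof (partial_le_lim h Sh K Hh0 HS). lra.
  - apply cv_le_const with (u := fun M => sum_f_R0 h M - sum_f_R0 h K).
    apply CV_minus. exact HS. apply cv_const.
    intros M. destruct (Compare_dec.le_lt_dec M K) as [HMK|HMK].
    + rewrite !sum_fsum. pose proof (fsum_mono_n h (S M) (S K) Hh0 ltac:(lia)).
      pose proof (partial_le_lim g G K Hg0 HG). rewrite sum_fsum in H0. lra.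
    + rewrite !sum_fsum. replace (S M) with (S K + (M - K))%nat by lia. rewrite !fsum_add.
      pose proof (partial_le_lim g G M Hg0 HG). rewrite sum_fsum in H.
      replace (S M) with (S K + (M - K))%nat in H by lia. rewrite fsum_add in H.
      assert (fsum (fun i => h (S K + i)%nat) (M - K) <= fsum (fun i => g (S K + i)%nat) (M - K)).
      { apply fsum_le. intros. apply Hhg. }
      lra.
Qed.

Lemma dom_cv (a : nat -> nat -> R) (b g : nat -> R) G :
  (forall n k, 0 <= a n k <= g k) -> (forall k, 0 <= b k <= g k) -> infinite_sum g G ->
  (forall k, Un_cv (fun n => a n k) (b k)) ->
  exists Bs, infinite_sum b Bs /\ exists As : nat -> R,
    (forall n, infinite_sum (a n) (As n)) /\ Un_cv As Bs.
Proof.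
  intros Ha Hb HG Hcv.
  destruct (Rseries_CV_comp b g Hb (exist _ G HG)) as [Bs HBs].
  set (As := fun n => proj1_sig (Rseries_CV_comp (a n) g (Ha n) (exist _ G HG))).
  assert (HAs : forall n, infinite_sum (a n) (As n)).
  { intros n. unfold As. destruct (Rseries_CV_comp (a n) g (Ha n) (exist _ G HG)). auto. }
  exists Bs. split. exact HBs. exists As. split. exact HAs.
  intros eps Heps.
  destruct (HG (eps / 4)) as [K HK]. lra.
  specialize (HK K (le_n K)). unfold Rdist in HK.
  assert (Hfin : Un_cv (fun n => sum_f_R0 (a n) K) (sum_f_R0 b K)).
  { apply (Un_cv_ext (fun n => fsum (fun k => a n k) (S K))).
    intros n. rewrite sum_fsum. reflexivity. rewrite sum_fsum. apply fsum_cv. intros k. apply Hcv. }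
  destruct (Hfin (eps / 2)) as [N HN]. lra.
  exists N. intros n Hn. specialize (HN n Hn). unfold Rdist in *.
  pose proof (tail_bound (a n) g (As n) G K (Ha n) (HAs n) HG).
  pose proof (tail_bound b g Bs G K Hb HBs HG).
  apply Rabs_def2 in HN. apply Rabs_def2 in HK.
  apply Rabs_def1; lra.
Qed.

Lemma B_eq f n w : W_sub f w n -> B n f w = f w.
Proof. intros H. unfold B. destruct (excluded_middle_informative (W_sub f w n)); tauto. Qed.
Lemma B_neq f n w : ~ W_sub f w n -> B n f w = false.
Proof. intros H. unfold B. destruct (excluded_middle_informative (W_sub f w n)); tauto. Qed.

Lemma Inf_B_close f n k :
  Inf k (B n f) <= Inf k f + 2 * Pr (fun w => ~ W_sub f w n) /\
  Inf k f <= Inf k (B n f) + 2 * Pr (fun w => ~ W_sub f w n).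
Proof.
  pose proof (Pr_flip k (fun w => ~ W_sub f w n)).
  split; unfold Inf.
  - apply Rle_trans with (Pr (fun w => f (flip k w) <> f w \/ ~ W_sub f w n \/ ~ W_sub f (flip k w) n)).
    2: { pose proof (Pr_union3 (fun w => f (flip k w) <> f w) (fun w => ~ W_sub f w n)
                              (fun w => ~ W_sub f (flip k w) n)). lra. }
    apply Pr_mono. intros w Hw.
    destruct (classic (W_sub f w n)) as [H1|H1]; [|right; left; auto].
    destruct (classic (W_sub f (flip k w) n)) as [H2|H2]; [|right; right; auto].
    left. rewrite B_eq in Hw by auto. rewrite B_eq in Hw by auto. auto.
  - apply Rle_trans with (Pr (fun w => B n f (flip k w) <> B n f w \/ ~ W_sub f w n \/ ~ W_sub f (flip k w) n)).
    2: { pose proof (Pr_union3 (fun w => B n f (flip k w) <> B n f w) (fun w => ~ W_sub f w n)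
                              (fun w => ~ W_sub f (flip k w) n)). lra. }
    apply Pr_mono. intros w Hw.
    destruct (classic (W_sub f w n)) as [H1|H1]; [|right; left; auto].
    destruct (classic (W_sub f (flip k w) n)) as [H2|H2]; [|right; right; auto].
    left. rewrite B_eq by auto. rewrite B_eq by auto. auto.
Qed.

Lemma negb_neq (a b : bool) : a <> b -> a = negb b.
Proof. destruct a, b; simpl; congruence. Qed.

Lemma Inf_f_bound f (H1 : Pr (fun _ => True) = 1) k : Inf k f <= Pr (fun w => ~ W_sub f w k).
Proof.
  unfold Inf. apply Rle_trans with (Pr (fun w => ~ W_sub f w k \/ Zs f k (flip k w))).
  2: { pose proof (Pr_union2 (fun w => ~ W_sub f w k) (fun w => Zs f k (flip k w))).
       pose proof (Pr_flip k (Zs f k)). rewrite (Zs_null f H1 k) in H0.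
       pose proof (Pr_nonneg (fun w => Zs f k (flip k w))). lra. }
  apply Pr_mono. intros w Hw. destruct (classic (W_sub f w k)) as [H|H]; [right|left; auto].
  apply W_sub_good in H. unfold Zs. rewrite prefix_flip by lia.
  rewrite <- (negb_neq _ _ (fun e => Hw (eq_sym e))). auto.
Qed.

Lemma Inf_B_large f (H1 : Pr (fun _ => True) = 1) n k : (n <= k)%nat -> Inf k (B n f) <= 0.
Proof.
  intros Hnk. unfold Inf. apply Rle_trans with (Pr (fun w => Zs f n w \/ Zs f n (flip k w))).
  2: { pose proof (Pr_union2 (Zs f n) (fun w => Zs f n (flip k w))).
       pose proof (Pr_flip k (Zs f n)). rewrite (Zs_null f H1 n) in *. lra. }
  apply Pr_mono. intros w Hw. unfold Zs. rewrite prefix_flip by auto.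
  destruct (classic (W_sub f w n)) as [Ha|Ha]; destruct (classic (W_sub f (flip k w) n)) as [Hb|Hb].
  - rewrite (B_eq f n w Ha), (B_eq f n (flip k w) Hb) in Hw. right.
    apply W_sub_good in Ha. rewrite <- (negb_neq _ _ (fun e => Hw (eq_sym e))). auto.
  - rewrite (B_eq f n w Ha), (B_neq f n (flip k w) Hb) in Hw.
    apply W_sub_good in Ha. rewrite W_sub_good, prefix_flip in Hb by auto.
    right. destruct (f w) eqn:Ef; [|congruence]. destruct (f (flip k w)); simpl; auto. tauto.
  - rewrite (B_neq f n w Ha), (B_eq f n (flip k w) Hb) in Hw.
    apply W_sub_good in Hb. rewrite prefix_flip in Hb by auto. rewrite W_sub_good in Ha.
    left. destruct (f (flip k w)) eqn:Ef; [|congruence]. destruct (f w); simpl; auto. tauto.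
  - rewrite (B_neq f n w Ha), (B_neq f n (flip k w) Hb) in Hw. congruence.
Qed.

Lemma Gc_tail f (A0 : Omega -> Prop) (HA0 : Pr (fun w => ~ A0 w) = 0)
  (HA0w : forall w, A0 w -> exists W, finite_set W /\ witness f w W) k L :
  (forall J, fsum (fun j => Pr (fun w => maxW f w (S k + j)%nat)) J <= L) ->
  Pr (fun w => ~ W_sub f w k) <= L.
Proof.
  intros HL.
  set (Fam := fun j => match j with O => fun w => ~ A0 w | S j' => fun w => maxW f w (S k + j')%nat end).
  apply Rle_trans with (Pr (fun w => exists j, Fam j w)).
  - apply Pr_mono. intros w Hw. destruct (classic (A0 w)) as [HA|HA]; [|exists O; auto].
    destruct (HA0w w HA) as [W [[N HN] Hwit]].
    assert (Hex : exists m, W_sub f w m) by (exists N, W; auto).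
    destruct (least_nat _ Hex) as [m [Hm Hmin]].
    assert (Hmk : (k < m)%nat).
    { destruct (Compare_dec.le_lt_dec m k); auto. exfalso. apply Hw. eapply W_sub_mono; eauto. }
    exists (S (m - S k)). simpl. replace (S (k + (m - S k)))%nat with m by lia.
    split; auto. intros n Hn. destruct (Compare_dec.le_lt_dec m n); auto. exfalso. eapply Hmin; eauto.
  - apply Pr_countable. intros N. rewrite sum_fsum. replace (S N) with (1 + N)%nat by lia.
    rewrite fsum_add. simpl fsum at 1. 
    replace (Pr (Fam O)) with 0 by (rewrite <- HA0; reflexivity).
    rewrite (fsum_ext _ (fun j => Pr (fun w => maxW f w (S k + j)%nat))) by (intros; reflexivity).
    specialize (HL N). lra.
Qed.

Theorem mainTheorem13 (f : Omega -> bool)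
  (Hmeas : measurable_fun f) (Hfin : finitary f) :
  (forall k : nat, Un_cv (fun n => Inf k (B n f)) (Inf k f)) /\
  ((exists p, p > 1/2 /\ knowable p f) ->
     exists Hf, infinite_sum (fun k => (Inf k f) ^ 2) Hf /\
     exists Hn : nat -> R,
       (forall n, infinite_sum (fun k => (Inf k (B n f)) ^ 2) (Hn n)) /\
       Un_cv Hn Hf) /\
  ((exists p, p > 1 /\ knowable p f) ->
     exists If, infinite_sum (fun k => Inf k f) If /\
     exists In : nat -> R,
       (forall n, infinite_sum (fun k => Inf k (B n f)) (In n)) /\
       Un_cv In If).
Proof.
  pose proof (Pr_full_one f Hfin) as H1.
  destruct Hfin as [A0 [HA0m [HA0P HA0w]]].
  pose proof (null_compl f A0 H1 HA0m HA0P) as HA0.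
  set (Gc := fun n w => ~ W_sub f w n).
  assert (HGcv : Un_cv (fun n => Pr (Gc n)) 0).
  { apply (cont_down Gc (fun w => ~ A0 w)); auto.
    - intros n. apply meas_carat. constructor. apply meas_W_sub; auto.
    - intros n w H Hn. apply H. eapply W_sub_mono; [|exact Hn]. lia.
    - intros w Hall HA. destruct (HA0w w HA) as [W [[N HN] Hwit]]. apply (Hall N). exists W. auto. }
  assert (HGc0 : forall n, 0 <= Pr (Gc n)) by (intros; apply Pr_nonneg).
  set (g := fun k => 3 * Pr (Gc k)).
  assert (HaB : forall n k, 0 <= Inf k (B n f) <= g k).
  { intros n k. split. apply Pr_nonneg. unfold g.
    destruct (Compare_dec.le_lt_dec n k) as [Hnk|Hnk].
    - pose proof (Inf_B_large f H1 n k Hnk). pose proof (HGc0 k). lra.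
    - destruct (Inf_B_close f n k) as [Hc _]. pose proof (Inf_f_bound f H1 k).
      assert (Pr (Gc n) <= Pr (Gc k)).
      { apply Pr_mono. intros w Hw Hk. apply Hw. eapply W_sub_mono; [|exact Hk]. lia. }
      unfold Gc in *. lra. }
  assert (Hbf : forall k, 0 <= Inf k f <= g k).
  { intros k. split. apply Pr_nonneg. pose proof (Inf_f_bound f H1 k). unfold g, Gc in *.
    pose proof (HGc0 k). unfold Gc in *. lra. }
  assert (Part1 : forall k : nat, Un_cv (fun n => Inf k (B n f)) (Inf k f)).
  { intros k eps Heps. destruct (HGcv (eps / 3)) as [N HN]. lra.
    exists N. intros n Hn. specialize (HN n Hn). unfold Rdist in *.
    rewrite Rminus_0_r, Rabs_pos_eq in HN by apply HGc0.
    destruct (Inf_B_close f n k) as [Ha Hb]. unfold Gc in HN.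
    apply Rabs_def1; lra. }
  set (q := fun m => Pr (fun w => maxW f w m)).
  assert (Hq : forall m, 0 <= q m) by (intros; apply Pr_nonneg).
  assert (Htail : forall p l (Hp : 0 <= p) (Hl : infinite_sum (fun m => powp p m * q m) l) k,
             Pr (Gc k) <= T q p l Hq Hp Hl k).
  { intros p l Hp Hl k. apply (Gc_tail f A0 HA0 HA0w). intros J.
    apply (t_le_T q p l Hq Hp Hl k J). }
  split; [exact Part1|split].
  - intros [p [Hp [_ [l Hl]]]].
    assert (Hp0 : 0 <= p) by lra.
    assert (Hsum : exists G, infinite_sum (fun k => g k * g k) G).
    { apply (summable_of_bounded _ (9 * (l * l))).
      intros k. unfold g. pose proof (HGc0 k). nra.
      intros K. apply Rle_trans with (9 * fsum (fun k => T q p l Hq Hp0 Hl k * T q p l Hq Hp0 Hl k) K).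
      rewrite <- fsum_scal. apply fsum_le. intros k _. unfold g.
      pose proof (Htail p l Hp0 Hl k). pose proof (HGc0 k). nra.
      pose proof (T2_sum_bound q p l Hq Hp0 Hl ltac:(lra) K). lra. }
    destruct Hsum as [G HG].
    apply (dom_cv (fun n k => Inf k (B n f) ^ 2) (fun k => Inf k f ^ 2) (fun k => g k * g k) G).
    + intros n k. pose proof (HaB n k). simpl. nra.
    + intros k. pose proof (Hbf k). simpl. nra.
    + exact HG.
    + intros k. apply (Un_cv_ext (fun n => Inf k (B n f) * Inf k (B n f))). intros; simpl; ring.
      replace (Inf k f ^ 2) with (Inf k f * Inf k f) by (simpl; ring).
      apply CV_mult; apply Part1.
  - intros [p [Hp [_ [l Hl]]]].
    assert (Hp0 : 0 <= p) by lra.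
    assert (Hsum : exists G, infinite_sum g G).
    { apply (summable_of_bounded _ (3 * l)).
      intros k. unfold g. pose proof (HGc0 k). lra.
      intros K. apply Rle_trans with (3 * fsum (T q p l Hq Hp0 Hl) K).
      rewrite <- fsum_scal. apply fsum_le. intros k _. unfold g.
      pose proof (Htail p l Hp0 Hl k). lra.
      pose proof (T_sum_bound q p l Hq Hp0 Hl ltac:(lra) K). lra. }
    destruct Hsum as [G HG].
    apply (dom_cv (fun n k => Inf k (B n f)) (fun k => Inf k f) g G); auto.
Qed.
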